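(* Let $(\mathcal{N},P_S)$ be any channel with state, fix $0\in\mathcal{S}$, and let $M\ge2$, $n\in\mathbb{N}$. Then $\eta^{\mathrm{NS},\mathrm{ca}}_{\mathrm{opt},M,n}(\mathcal{N},P_S)$ equals the optimal value of the following linear program in variables $r_{x^n,y^n,s^n}$ ($x^n\in\mathcal{X}^n,y^n\in\mathcal{Y}^n,s^n\in\mathcal{S}^n$) and $q_{x^n\mid s^n}$ ($x^n\in\mathcal{X}^n,s^n\in\mathcal{S}^n$): maximize $\sum_{x^n,y^n,s^n} r_{x^n,y^n,s^n}\,P_S^{\otimes n}(s^n)\,\mathcal{N}^{\otimes n}(y^n\mid x^n,s^n)$ subject to (i) $r_{x^n,y^n,s^n}\ge0$ for all $(x^n,y^n,s^n)$; (ii) $\sum_{x^n}r_{x^n,y^n,s^n}=\frac1M$ for all $(s^n,y^n)$; (iii) $\sum_{x^n}q_{x^n\mid s^n}=1$ for all $s^n$; (iv) $r_{x^n,y^n,s^n}\le q_{x^n\mid s^n}$ for all $(x^n,y^n,s^n)$; (v) for all $i\in[n-1]$ and all $(x^i,y^n,s^n)$: $\sum_{x_{i+1}^n}r_{x^n,y^n,(s^i,s_{i+1}^n)}=\sum_{x_{i+1}^n}r_{x^n,y^n,(s^i,0^{n-i})}$; (vi) for all $i\in[n-1]$ and all $(x^i,s^n)$: $\sum_{x_{i+1}^n}q_{x^n\mid(s^i,s_{i+1}^n)}=\sum_{x_{i+1}^n}q_{x^n\mid(s^i,0^{n-i})}$, where $0^{k}$ denotes the all-zero sequence of length $k$ and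 in (v),(vi) the sums run over $x_{i+1}^n$ with $x^i$ fixed.
   Context: A channel with state $(\mathcal{N},P_S)$ consists of finite sets $\mathcal{X},\mathcal{Y},\mathcal{S}$, a conditional distribution $\mathcal{N}(y\mid x,s)$ and a state distribution $P_S$; $P_S^{\otimes n}(s^n)=\prod_iP_S(s_i)$, $\mathcal{N}^{\otimes n}(y^n\mid x^n,s^n)=\prod_i\mathcal{N}(y_i\mid x_i,s_i)$. Notation: $x^i=(x_1,\dots,x_i)$, $x_{i+1}^n=(x_{i+1},\dots,x_n)$, $[M]=\{1,\dots,M\}$. An NS-assisted coding scheme with causal CSIT with message size $M$ and blocklength $n$ is a conditional distribution $Z(x^n,\hat w\mid w,s^n,y^n)$ on $\mathcal{X}^n\times[M]$ given $(w,s^n,y^n)\in[M]\times\mathcal{S}^n\times\mathcal{Y}^n$ such that: (C1) $\sum_{\hat w}Z(x^n,\hat w\mid w,s^n,y^n)$ does not depend on $y^n$; (C2) $\sum_{x^n}Z(x^n,\hat w\mid w,s^n,y^n)$ does not depend on $(w,s^n)$; (C3) for each $i\in[n-1]$, $\sum_{x_{i+1}^n}Z(x^n,\hat w\mid w,s^n,y^n)$ does not depend on $s_{i+1}^n$. Its success probability is $\eta(Z)=\frac1M\sum_w\sum_{x^n,s^n,y^n}P_S^{\otimes n}(s^n)\mathcal{N}^{\otimes n}(y^n\mid x^n,s^n)Z(x^n,w\mid w,s^n,y^n)$, and $\eta^{\mathrm{NS},\mathrm{ca}}_{\mathrm{opt},M,n}(\mathcal{N},P_S)$ is the supremum of $\eta(Z)$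 over all such schemes. *)

(* Defs.v *)
From HB Require Import structures.
From mathcomp Require Import all_boot all_order all_algebra.
From mathcomp Require Import boolp classical_sets reals.
Set Implicit Arguments. Unset Strict Implicit. Unset Printing Implicit Defensive.
Import Order.TTheory GRing.Theory Num.Theory.
Local Open Scope ring_scope.
Local Open Scope classical_set_scope.

Section Defs.
Variables (R : realType) (X Y S : finType).

(* a channel with state: N x s y = N(y | x, s) *)
Definition is_channel (N : X -> S -> Y -> R) :=
  (forall x s y, 0 <= N x s y) /\ (forall x s, \sum_(y : Y) N x s y = 1).
Definition is_distr (P : S -> R) :=
  (forall s, 0 <= P s) /\ \sum_(s : S) P s = 1.

Definition PSn (n : nat) (P : S -> R) (s : S ^ n) : R := \prod_(i < n) P (s i).
Definition Nn (n : nat) (N : X -> S -> Y -> R) (y : Y ^ n) (x : X ^ n) (s : S ^ n) : R :=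
  \prod_(i < n) N (x i) (s i) (y i).

Definition agree_upto {T : Type} (n i : nat) (u v : T ^ n) : Prop :=
  forall j : 'I_n, (j < i)%N -> u j = v j.

Definition pad0 (n i : nat) (s0 : S) (s : S ^ n) : S ^ n :=
  [ffun j : 'I_n => if (j < i)%N then s j else s0].

(* NS-assisted coding scheme with causal CSIT:
   Z w s y x w' = Z(x^n, w' | w, s^n, y^n) *)
Definition ns_ca_scheme (M n : nat)
    (Z : 'I_M -> S ^ n -> Y ^ n -> X ^ n -> 'I_M -> R) : Prop :=
  (forall w s y x w', 0 <= Z w s y x w') /\
  (forall w s y, \sum_(x : X ^ n) \sum_(w' : 'I_M) Z w s y x w' = 1) /\
  (forall w s y y' x, \sum_(w' : 'I_M) Z w s y x w' = \sum_(w' : 'I_M) Z w s y' x w') /\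
  (forall w w2 s s2 y w', \sum_(x : X ^ n) Z w s y x w' = \sum_(x : X ^ n) Z w2 s2 y x w') /\
  (forall i : nat, (1 <= i)%N -> (i <= n - 1)%N ->
     forall (x0 : X ^ n) (w' w : 'I_M) (s s2 : S ^ n) (y : Y ^ n),
       agree_upto i s s2 ->
       \sum_(x : X ^ n | `[< agree_upto i x x0 >]) Z w s y x w' =
       \sum_(x : X ^ n | `[< agree_upto i x x0 >]) Z w s2 y x w').

Definition success_prob (M n : nat) (N : X -> S -> Y -> R) (P : S -> R)
    (Z : 'I_M -> S ^ n -> Y ^ n -> X ^ n -> 'I_M -> R) : R :=
  M%:R^-1 * \sum_(w : 'I_M) \sum_(x : X ^ n) \sum_(s : S ^ n) \sum_(y : Y ^ n)
     PSn P s * Nn N y x s * Z w s y x w.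

Definition eta_opt (M n : nat) (N : X -> S -> Y -> R) (P : S -> R) : R :=
  sup [set e | exists Z : 'I_M -> S ^ n -> Y ^ n -> X ^ n -> 'I_M -> R, ns_ca_scheme Z /\ success_prob N P Z = e].

(* the linear program: r x y s = r_{x^n,y^n,s^n}, q x s = q_{x^n|s^n} *)
Definition lp_feasible (M n : nat) (s0 : S)
    (r : X ^ n -> Y ^ n -> S ^ n -> R) (q : X ^ n -> S ^ n -> R) : Prop :=
  (forall x y s, 0 <= r x y s) /\
  (forall s y, \sum_(x : X ^ n) r x y s = M%:R^-1) /\
  (forall s, \sum_(x : X ^ n) q x s = 1) /\
  (forall x y s, r x y s <= q x s) /\
  (forall i : nat, (1 <= i)%N -> (i <= n - 1)%N ->
     forall (x0 : X ^ n) (y : Y ^ n) (s : S ^ n),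
       \sum_(x : X ^ n | `[< agree_upto i x x0 >]) r x y s =
       \sum_(x : X ^ n | `[< agree_upto i x x0 >]) r x y (pad0 i s0 s)) /\
  (forall i : nat, (1 <= i)%N -> (i <= n - 1)%N ->
     forall (x0 : X ^ n) (s : S ^ n),
       \sum_(x : X ^ n | `[< agree_upto i x x0 >]) q x s =
       \sum_(x : X ^ n | `[< agree_upto i x x0 >]) q x (pad0 i s0 s)).

Definition lp_objective (n : nat) (N : X -> S -> Y -> R) (P : S -> R)
    (r : X ^ n -> Y ^ n -> S ^ n -> R) : R :=
  \sum_(x : X ^ n) \sum_(y : Y ^ n) \sum_(s : S ^ n) r x y s * PSn P s * Nn N y x s.

Definition lp_opt (M n : nat) (s0 : S) (N : X -> S -> Y -> R) (P : S -> R) : R :=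
  sup [set v | exists (r : X ^ n -> Y ^ n -> S ^ n -> R) q, lp_feasible M s0 r q /\ lp_objective N P r = v].

End Defs.

Arguments eta_opt {R X Y S} M n N P.
Arguments lp_opt {R X Y S} M n s0 N P.

(* Main.v *)
Require Import Defs.
From HB Require Import structures.
From mathcomp Require Import all_boot all_order all_algebra.
From mathcomp Require Import boolp classical_sets reals.
From mathcomp Require Import zify ring lra.
Import Order.TTheory GRing.Theory Num.Theory.
Local Open Scope ring_scope.
Local Open Scope classical_set_scope.

Lemma sum_if (R : realType) (M : nat) (w : 'I_M) (a b : R) :
  \sum_(w' : 'I_M) (if w' == w then a else b) = a + b *+ M.-1.
Proof.
rewrite (bigD1 w) //= eqxx; congr (_ + _).
rewrite (eq_bigr (fun _ => b)); last by move=> i /negbTE ->.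
by rewrite sumr_const cardC1 card_ord.
Qed.

Lemma pad0_agree (S : finType) n i (s0 : S) (s s2 : S ^ n) :
  agree_upto i s s2 -> pad0 i s0 s = pad0 i s0 s2.
Proof.
move=> h; apply/ffunP => j; rewrite !ffunE; case: ifP => // hj; exact: h.
Qed.

Lemma lp_to_scheme (R : realType) (X Y S : finType)
    (N : X -> S -> Y -> R) (P : S -> R) (s0 : S) (M n : nat)
    (r : X ^ n -> Y ^ n -> S ^ n -> R) (q : X ^ n -> S ^ n -> R) :
  (2 <= M)%N -> lp_feasible M s0 r q ->
  exists Z : 'I_M -> S ^ n -> Y ^ n -> X ^ n -> 'I_M -> R, ns_ca_scheme Z /\ success_prob N P Z = lp_objective N P r.
Proof.
move=> M2 [r0 [rs [qs [rq [rc qc]]]]].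
have m0 : (M.-1)%:R != 0 :> R by rewrite pnatr_eq0 -lt0n; lia.
have mM : M%:R = (M.-1)%:R + 1 :> R by rewrite natr1 prednK //; lia.
pose Z (w : 'I_M) (s : S ^ n) (y : Y ^ n) (x : X ^ n) (w' : 'I_M) :=
  if w' == w then r x y s else (q x s - r x y s) / (M.-1)%:R.
have Zsum w s y x : \sum_(w' : 'I_M) Z w s y x w' = q x s.
  rewrite /Z sum_if -[_ *+ M.-1]mulr_natr mulfVK //; by rewrite addrC subrK.
have Zx w s y w' : \sum_(x : X ^ n) Z w s y x w' = M%:R^-1.
  rewrite /Z; case: (w' == w); first exact: rs.
  rewrite -mulr_suml sumrB qs rs mM; field.
  by rewrite m0 /= -mM pnatr_eq0 -lt0n; lia.
exists Z; split; last first.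
  rewrite /success_prob /lp_objective.
  rewrite (eq_bigr (fun _ => \sum_(x : X ^ n) \sum_(y : Y ^ n) \sum_(s : S ^ n) r x y s * PSn P s * Nn N y x s)).
    rewrite sumr_const card_ord -[in X in _ * X]mulr_natl mulrA mulVf ?mul1r // pnatr_eq0 -lt0n; lia.
  move=> w _; apply: eq_bigr => x _; rewrite exchange_big; apply: eq_bigr => y _.
  apply: eq_bigr => s _; rewrite /Z eqxx; by rewrite mulrC mulrA.
split.
  move=> w s y x w'; rewrite /Z; case: (w' == w) => //.
  apply: divr_ge0; last exact: ler0n.
  by rewrite subr_ge0.
split.
  by move=> w s y; under eq_bigr do rewrite Zsum; apply: qs.
split; first by move=> w s y y' x; rewrite !Zsum.
split; first by move=> w w2 s s2 y w'; rewrite !Zx.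
move=> i i1 i2 x0 w' w s s2 y hs.
rewrite /Z; case: (w' == w).
  by rewrite (rc i i1 i2 x0 y s) (rc i i1 i2 x0 y s2) (pad0_agree _ _ _ s0 _ _ hs).
rewrite -!mulr_suml !sumrB (rc i i1 i2 x0 y s) (rc i i1 i2 x0 y s2) (qc i i1 i2 x0 s) (qc i i1 i2 x0 s2).
by rewrite (pad0_agree _ _ _ s0 _ _ hs).
Qed.

Lemma agree_pad0 (S : finType) n i (s0 : S) (s : S ^ n) :
  agree_upto i s (pad0 i s0 s).
Proof. by move=> j hj; rewrite ffunE hj. Qed.

Lemma term_le_sum (R : realType) (T : finType) (f : T -> R) (t : T) :
  (forall u, 0 <= f u) -> f t <= \sum_u f u.
Proof.
move=> h; rewrite (bigD1 t) //= lerDl; exact: sumr_ge0.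
Qed.

Lemma scheme_to_lp (R : realType) (X Y S : finType)
    (N : X -> S -> Y -> R) (P : S -> R) (s0 : S) (M n : nat)
    (Z : 'I_M -> S ^ n -> Y ^ n -> X ^ n -> 'I_M -> R) (y0 : Y ^ n) :
  (2 <= M)%N -> ns_ca_scheme Z ->
  exists (r : X ^ n -> Y ^ n -> S ^ n -> R) (q : X ^ n -> S ^ n -> R),
    lp_feasible M s0 r q /\ lp_objective N P r = success_prob N P Z.
Proof.
move=> M2 [Z0 [Z1 [C1 [C2 C3]]]].
have Mn0 : M%:R != 0 :> R by rewrite pnatr_eq0 -lt0n; lia.
pose w0 : 'I_M := Ordinal (leq_trans (isT : (0 < 2)%N) M2).
exists (fun x y s => M%:R^-1 * \sum_(w : 'I_M) Z w s y x w).
exists (fun x s => M%:R^-1 * \sum_(w : 'I_M) \sum_(w' : 'I_M) Z w s y0 x w').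
split; last first.
  rewrite /lp_objective /success_prob.
  transitivity (\sum_(x : X ^ n) \sum_(y : Y ^ n) \sum_(s : S ^ n) \sum_(w : 'I_M)
     M%:R^-1 * (PSn P s * Nn N y x s * Z w s y x w)).
    apply: eq_bigr => x _; apply: eq_bigr => y _; apply: eq_bigr => s _.
    rewrite mulr_sumr !mulr_suml; apply: eq_bigr => w _; ring.
  transitivity (\sum_(w : 'I_M) \sum_(x : X ^ n) \sum_(s : S ^ n) \sum_(y : Y ^ n)
     M%:R^-1 * (PSn P s * Nn N y x s * Z w s y x w)); last first.
    rewrite mulr_sumr; apply: eq_bigr => w _; rewrite mulr_sumr; apply: eq_bigr => x _.
    rewrite mulr_sumr; apply: eq_bigr => s _; by rewrite mulr_sumr.
  rewrite [RHS]exchange_big /=; apply: eq_bigr => x _.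
  rewrite [RHS]exchange_big /=.
  under [RHS]eq_bigr do rewrite exchange_big /=.
  by rewrite [RHS]exchange_big.
split.
  by move=> x y s; apply: mulr_ge0; [rewrite invr_ge0 ler0n | apply: sumr_ge0].
split.
  move=> s y; rewrite -mulr_sumr exchange_big /=.
  under eq_bigr do rewrite (C2 _ w0 s s).
  by rewrite -exchange_big /= Z1 mulr1.
split.
  move=> s; rewrite -mulr_sumr exchange_big /=.
  under eq_bigr do rewrite Z1.
  by rewrite sumr_const card_ord -[in X in _ * X]mulr_natl mulr1 mulVf.
split.
  move=> x y s; apply: ler_wpM2l; first by rewrite invr_ge0 ler0n.
  apply: ler_sum => w _; rewrite (C1 w s y0 y x); exact: term_le_sum.
split.
  move=> i i1 i2 x0 y s; rewrite -!mulr_sumr; congr (_ * _).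
  rewrite exchange_big [RHS]exchange_big /=; apply: eq_bigr => w _.
  exact: C3 (agree_pad0 _ _ _ s0 s).
move=> i i1 i2 x0 s; rewrite -!mulr_sumr; congr (_ * _).
rewrite exchange_big [RHS]exchange_big /=; apply: eq_bigr => w _.
rewrite exchange_big [RHS]exchange_big /=; apply: eq_bigr => w' _.
exact: C3 (agree_pad0 _ _ _ s0 s).
Qed.

Theorem mainTheorem3 (R : realType) (X Y S : finType)
    (N : X -> S -> Y -> R) (P : S -> R) (s0 : S) (M n : nat) :
  is_channel N -> is_distr P -> (2 <= M)%N ->
  eta_opt M n N P = lp_opt M n s0 N P.
Proof.
move=> [N0 N1] _ M2; rewrite /eta_opt /lp_opt.
case: (pickP (fun _ : Y ^ n => true)) => [y0 _ | hY].
  congr sup; apply/seteqP; split => e.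
    move=> [Z [hZ <-]].
    have [r [q [hf ho]]] := @scheme_to_lp _ _ _ _ N P s0 _ _ _ y0 M2 hZ.
    by exists r, q.
  move=> [r [q [hf <-]]].
  have [Z [hZ ho]] := @lp_to_scheme _ _ _ _ N P s0 _ _ _ _ M2 hf.
  by exists Z.
have hYc : #|{ffun 'I_n -> Y}| = 0%N.
  by apply: eq_card0 => y; rewrite !inE; apply: hY.
rewrite card_ffun card_ord in hYc.
move/eqP: hYc; rewrite expn_eq0 => /andP[/eqP hYc0 npos].
have hy : forall y : Y, False.
  by move=> y; have := card0_eq hYc0 y.
have hX : forall x : X ^ n, False.
  move=> x; have := N1 (x (Ordinal npos)) s0.
  rewrite big1 => [/eqP|y]; [by rewrite eq_sym oner_eq0 | by case: (hy y)].
have -> : [set v | exists (r : X ^ n -> Y ^ n -> S ^ n -> R) q,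
    lp_feasible M s0 r q /\ lp_objective N P r = v] = set0.
  apply/seteqP; split => // v [r [q [[_ [_ [qs _]]] _]]].
  have := qs [ffun => s0]; rewrite big1 => [/eqP|x]; [by rewrite eq_sym oner_eq0 | by case: (hX x)].
have -> : [set e | exists Z : 'I_M -> S ^ n -> Y ^ n -> X ^ n -> 'I_M -> R,
    ns_ca_scheme Z /\ success_prob N P Z = e] = [set 0].
  apply/seteqP; split => e.
    move=> [Z [_ <-]]; rewrite /success_prob big1 ?mulr0 // => w _.
    by rewrite big1 // => x; case: (hX x).
  move=> /= ->; exists (fun _ _ _ _ _ => 0); split.
    split; first by [].
    split; first by move=> w s y; case: (hY y).
    split; first by [].
    split; first by move=> w w2 s s2 y; case: (hY y).
    by move=> i _ _ x0 w' w s s2 y; case: (hY y).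
  rewrite /success_prob big1 ?mulr0 // => w _.
  by rewrite big1 // => x; case: (hX x).
by rewrite sup1 sup0.
Qed.
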